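(* Let $1\le p<\infty$ and $n\ge 2$. Then $U(n,p) \le U(n-1,p)\cdot w(n,p)$.
   Context: Let $q = 1/p$ (with $0^q=0$). For $n\ge 1$, $U(n,p)$ denotes the maximum of $\mathrm{per}(A)=\sum_{\sigma\in S_n}\prod_{i=1}^n a_{i\sigma(i)}$ over all real $n\times n$ matrices $A$ each of whose rows has $\ell_p$-norm equal to $1$. For $k\ge1$ let $\Delta_k=\{y\in\mathbb R^k: y_i\ge 0,\ \sum_i y_i=1\}$, and define $P_k(y) = \sum_{i=1}^k y_i^q \prod_{j\ne i}(1-y_j)^q$ for $y\in\Delta_k$. Then $w(k,p)=\max_{y\in\Delta_k} P_k(y)$. *)

(* Defs.v *)
From HB Require Import structures.
From mathcomp Require Import all_boot all_order all_algebra all_fingroup.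
From mathcomp Require Import all_classical all_reals all_analysis.
Unset Printing Implicit Defensive.
Import Order.TTheory GRing.Theory Num.Theory.
Local Open Scope ring_scope.
Local Open Scope classical_set_scope.

Section Defs.
Variable R : realType.

Definition perm_mx (n : nat) (A : 'M[R]_n) : R :=
  \sum_(s : 'S_n) \prod_(i < n) A i (s i).

Definition rows_lp_unit (p : R) (n : nat) (A : 'M[R]_n) : Prop :=
  forall i : 'I_n, (\sum_(j < n) `|A i j| `^ p) `^ p^-1 = 1.

(* U(n,p) = max of per(A) over such matrices (sup; the max is attained by compactness) *)
Definition U (n : nat) (p : R) : R :=
  sup [set @perm_mx n A | A in [set A : 'M[R]_n | @rows_lp_unit p n A]].

Definition simplex (k : nat) : set ('I_k -> R) :=
  [set y | (forall i, 0 <= y i) /\ \sum_(i < k) y i = 1].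

(* P_k(y) = sum_i y_i^q prod_{j<>i} (1 - y_j)^q, q = 1/p, powR has 0 `^ q = 0 for q > 0 *)
Definition Pk (k : nat) (p : R) (y : 'I_k -> R) : R :=
  \sum_(i < k) (y i `^ p^-1 * \prod_(j < k | j != i) (1 - y j) `^ p^-1).

Definition w (k : nat) (p : R) : R := sup [set @Pk k p y | y in simplex k].

End Defs.
Arguments U {R} n p.
Arguments w {R} k p.
Arguments Pk {R} k p y.
Arguments perm_mx {R} n A.
Arguments rows_lp_unit {R} p n A.
Arguments simplex {R} k.

(* Main.v *)
Require Import Defs.
Set Warnings "-notation-overridden -ambiguous-paths -notation-incompatible-prefix -deprecated".
From HB Require Import structures.
From mathcomp Require Import all_boot all_order all_algebra all_fingroup.
From mathcomp Require Import all_classical all_reals all_analysis.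
From mathcomp Require Import ring lra.
Import Order.TTheory GRing.Theory Num.Theory.
Local Open Scope ring_scope.
Import numFieldTopology.Exports numFieldNormedType.Exports.
Section Perm.
Variable R : realType.

Definition minor m (A : 'M[R]_m.+1) (j c : 'I_m.+1) : 'M[R]_m :=
  \matrix_(i, k) A (lift j i) (lift c k).
Arguments minor {m}.

Lemma perm_cof m (A : 'M[R]_m.+1) i0 j0 :
  Defs.perm_mx _ (minor A i0 j0) =
  \sum_(s : 'S_m.+1 | s i0 == j0) \prod_(k | i0 != k) A k (s k).
Proof.
rewrite (reindex (lift_perm i0 j0)); last first.
  pose ulsf i (s : 'S_m.+1) k := odflt k (unlift (s i) (s (lift i k))).
  have ulsfK i (s : 'S_m.+1) k: lift (s i) (ulsf i s k) = s (lift i k).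
    rewrite /ulsf; have:= neq_lift i k.
    by rewrite -(can_eq (permK s)) => /unlift_some[] ? ? ->.
  have inj_ulsf: injective (ulsf i0 _).
    move=> s; apply: can_inj (ulsf (s i0) s^-1%g) _ => k'.
    by rewrite {1}/ulsf ulsfK !permK liftK.
  exists (fun s => perm (inj_ulsf s)) => [s _ | s].
    by apply/permP=> k'; rewrite permE /ulsf lift_perm_lift lift_perm_id liftK.
  move/(s _ =P _) => si0; apply/permP=> k.
  case: (unliftP i0 k) => [k'|] ->; rewrite ?lift_perm_id //.
  by rewrite lift_perm_lift -si0 permE ulsfK.
rewrite /Defs.perm_mx.
apply: eq_big => [s | s _]; first by rewrite lift_perm_id eqxx.
case: (pickP 'I_m) => [k0 _ | n0]; last first.
  by rewrite !big1 // => [j /unlift_some[i] | i _]; have:= n0 i.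
rewrite (reindex (lift i0)).
  by apply: eq_big => [k | k _] /=; rewrite ?neq_lift // !mxE lift_perm_lift.
exists (fun k => odflt k0 (unlift i0 k)) => k; first by rewrite liftK.
by case/unlift_some=> k' -> ->.
Qed.

Lemma perm_expand_col m (A : 'M[R]_m.+1) c :
  Defs.perm_mx _ A = \sum_j A j c * Defs.perm_mx _ (minor A j c).
Proof.
rewrite {1}/Defs.perm_mx (partition_big (fun s : 'S_m.+1 => (s^-1)%g c) predT) //=.
apply: eq_bigr => j _; rewrite perm_cof big_distrr /=.
apply: eq_big => [s | s /eqP sj].
  by apply/eqP/eqP => [<-|<-]; rewrite ?permKV ?permK.
have sjc : s j = c by rewrite -sj permKV.
rewrite (bigD1 j) //= sjc; congr (_ * _).
by apply: eq_bigl => i; rewrite eq_sym.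
Qed.

Lemma perm_scale m (M : 'M[R]_m) (d : 'I_m -> R) :
  Defs.perm_mx _ (\matrix_(i, j) (d i * M i j)) = (\prod_i d i) * Defs.perm_mx _ M.
Proof.
rewrite /Defs.perm_mx mulr_sumr; apply: eq_bigr => s _; rewrite -big_split /=.
by apply: eq_bigr => i _; rewrite mxE.
Qed.


Definition rn p m (M : 'M[R]_m) (i : 'I_m) : R :=
  (\sum_j `|M i j| `^ p) `^ p^-1.
Arguments rn p {m} M i.

Lemma unit_rowsum p m (A : 'M[R]_m) : 0 < p -> rows_lp_unit p m A ->
  forall i, \sum_j `|A i j| `^ p = 1.
Proof.
move=> p0 hA i.
have S0 : 0 <= \sum_j `|A i j| `^ p by apply: sumr_ge0 => j _; apply: powR_ge0.
have e : (\sum_j `|A i j| `^ p) `^ p^-1 `^ p = \sum_j `|A i j| `^ p.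
  by rewrite -powRrM mulVf ?powRr1 // lt0r_neq0.
by rewrite -e hA powR1.
Qed.

Lemma le_sum1 m (F : 'I_m -> R) j : (forall i, 0 <= F i) -> F j <= \sum_i F i.
Proof.
by move=> F0; rewrite (bigD1 j) //= lerDl; apply: sumr_ge0 => i _.
Qed.

Lemma entry_le1 p m (A : 'M[R]_m) : 0 < p -> rows_lp_unit p m A ->
  forall i j, `|A i j| <= 1.
Proof.
move=> p0 hA i j; rewrite leNgt; apply/negP => h1.
have := unit_rowsum _ _ _ p0 hA i.
have : 1 `^ p < `|A i j| `^ p.
  by apply: (gt0_ltr_powR p0); rewrite // nnegrE.
rewrite powR1 /= => h2 h3.
have := @le_sum1 _ (fun j => `|A i j| `^ p) j (fun j => powR_ge0 `|A i j| p).
by rewrite h3 leNgt h2.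
Qed.

Lemma per_le_fact p m (A : 'M[R]_m) : 0 < p -> rows_lp_unit p m A ->
  Defs.perm_mx _ A <= #|{: 'S_m}|%:R.
Proof.
move=> p0 hA; apply: le_trans (ler_norm _) _.
rewrite /Defs.perm_mx; apply: le_trans (ler_norm_sum _ _ _) _.
rewrite -sumr_const; apply: ler_sum => s _; rewrite normr_prod.
apply: prodr_ile1 => i _; apply/andP; split; [exact: normr_ge0 | exact: (entry_le1 _ _ _ p0 hA)].
Qed.

Lemma U_hub p m : 0 < p ->
  has_ubound [set Defs.perm_mx m A | A in [set A : 'M[R]_m | rows_lp_unit p m A]].
Proof.
move=> p0; exists (#|{: 'S_m}|%:R) => _ [A hA <-]; exact: (per_le_fact _ _ _ p0 hA).
Qed.

Lemma per_le_U p m (M : 'M[R]_m.+1) : 1 <= p ->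
  `|Defs.perm_mx _ M| <= U m.+1 p * \prod_i rn p M i.
Proof.
move=> p1; have p0 : 0 < p by apply: lt_le_trans p1.
have pn0 : p != 0 by apply: lt0r_neq0.
case: (boolP [exists i, rn p M i == 0]) => [/existsP [i /eqP hi] | /existsPn hn].
  have Mi0 : forall j, M i j = 0.
    move=> j; have := hi; rewrite /rn => /powR_eq0_eq0 /psumr_eq0P h.
    have := h (fun k _ => powR_ge0 _ _) j isT => hj.
    by apply/normr0_eq0; apply: (powR_eq0_eq0 hj).
  rewrite (bigD1 i) //= hi mul0r mulr0 normr_le0 /Defs.perm_mx.
  apply/eqP; apply: big1 => s _; rewrite (bigD1 i) //= Mi0 mul0r //.
have rnpos : forall i, 0 < rn p M i.
  by move=> i; rewrite lt_def (negbTE (hn i)) /= /rn powR_ge0.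
set e : R := if 0 <= Defs.perm_mx _ M then 1 else -1.
pose g (i : 'I_m.+1) : R := if i == ord0 then e else 1.
pose d i := g i / rn p M i.
pose M' := \matrix_(i, j) (d i * M i j).
have unitM' : rows_lp_unit p _ M'.
  move=> i.
  under eq_bigr do rewrite mxE normrM powRM //.
  rewrite -mulr_sumr powRM ?powR_ge0 //; last by apply: sumr_ge0 => j _; apply: powR_ge0.
  rewrite -powRrM mulfV // powRr1 //.
  rewrite /d normrM normfV (gtr0_norm (rnpos i)).
  have -> : `|g i| = 1.
    rewrite /g; case: (i == ord0); last exact: normr1.
    by rewrite /e; case: ifP => _; rewrite ?normrN normr1.
  rewrite mul1r; exact: mulVf (lt0r_neq0 (rnpos i)).
have : Defs.perm_mx _ M' <= U m.+1 p.
  by apply: ub_le_sup; [apply: U_hub | exists M'].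
rewrite perm_scale /d big_split /= prodfV.
have -> : \prod_i g i = e.
  rewrite (bigD1 ord0) //= /g eqxx big1 ?mulr1 // => i /negbTE -> //.
have eM : e * Defs.perm_mx _ M = `|Defs.perm_mx _ M|.
  rewrite /e; case: ifP => h; first by rewrite mul1r ger0_norm.
  by rewrite mulN1r ltr0_norm // ltNge h.
rewrite mulrAC eM ler_pdivrMr //; apply: prodr_gt0 => i _; exact: rnpos.
Qed.

End Perm.
Section T.
Variable R : realType.
Lemma cont_term (a t : R) : a + t * (1 - a) != 0 ->
  {for t, continuous (fun s : R => a / (a + s * (1 - a)))}.
Proof.
move=> h.
have h1 : {for t, continuous (fun s : R => a + s * (1 - a))}.
  have -> : (fun s : R => a + s * (1 - a)) = (fun=> a) + (fun s => s * (1 - a)).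
    by apply: funext.
  apply: continuousD; first exact: cst_continuous.
  have -> : (fun s : R => s * (1 - a)) = (fun s => s) \* (fun=> 1 - a) by [].
  apply: continuousM; [exact: cvg_id | exact: cst_continuous].
have -> : (fun s : R => a / (a + s * (1 - a))) =
  (fun=> a) \* (fun s => (a + s * (1 - a))^-1) by [].
apply: continuousM; first exact: cst_continuous.
exact: continuousV.
Qed.

Lemma cont_sum n (g : 'I_n -> R -> R) t : (forall i, {for t, continuous (g i)}) ->
  {for t, continuous (fun s => \sum_i g i s)}.
Proof.
move=> hg.
suff H : forall r : seq 'I_n, {for t, continuous (fun s => \sum_(i <- r) g i s)} by exact: H.
elim => [|i r IH].
  have -> : (fun s => \sum_(i <- [::]) g i s) = fun=> 0 by apply: funext => s; rewrite big_nil.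
  exact: cst_continuous.
have -> : (fun s => \sum_(j <- i :: r) g j s) = g i + (fun s => \sum_(j <- r) g j s).
  by apply: funext => s; rewrite big_cons.
exact: continuousD.
Qed.

Lemma le_sum1c m (F : 'I_m -> R) j : (forall i, 0 <= F i) -> F j <= \sum_i F i.
Proof.
by move=> F0; rewrite (bigD1 j) //= lerDl; apply: sumr_ge0 => i _.
Qed.

Lemma prod_powR n (P : pred 'I_n) (a : 'I_n -> R) r : (forall i, 0 <= a i) ->
  \prod_(i | P i) a i `^ r = (\prod_(i | P i) a i) `^ r.
Proof.
move=> a0.
suff [] : 0 <= \prod_(i | P i) a i /\
  \prod_(i | P i) a i `^ r = (\prod_(i | P i) a i) `^ r by [].
apply: (big_rec2 (fun x y => 0 <= y /\ x = y `^ r)).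
  by rewrite powR1.
move=> i x y _ [y0 ->]; split; first by rewrite mulr_ge0.
by rewrite powRM.
Qed.

Lemma weier (I : Type) (s : seq I) (x : I -> R) c : -1 <= c ->
  (forall i, 0 <= x i <= 1) ->
  1 + c * \sum_(i <- s) x i <= \prod_(i <- s) (1 + c * x i).
Proof.
move=> c1 x01; elim: s => [|a s IH]; first by rewrite !big_nil mulr0 addr0.
rewrite !big_cons.
have /andP [xa0 xa1] := x01 a.
have S0 : 0 <= \sum_(i <- s) x i by apply: sumr_ge0 => i _; have /andP[] := x01 i.
have f0 : 0 <= 1 + c * x a by nra.
apply: le_trans (ler_wpM2l f0 IH).
have : 0 <= (c * c) * x a * (\sum_(i <- s) x i) 
  by rewrite mulr_ge0 // mulr_ge0 // -expr2 sqr_ge0.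
set S := \sum_(i <- s) x i; nra.
Qed.

Lemma powR_le1 (a r : R) : 0 <= r -> 0 <= a <= 1 -> a `^ r <= 1.
Proof.
move=> r0 /andP [a0 a1].
have := ge0_ler_powR r0 a0 ler01 a1; rewrite powR1 //.
Qed.

Lemma term_bnd {p : R} {n} {y : 'I_n -> R} i : 0 < p -> (forall i, 0 <= y i <= 1) ->
  0 <= y i `^ p^-1 * \prod_(j | j != i) (1 - y j) `^ p^-1 <= 1.
Proof.
move=> p0 y01; have q0 : 0 <= p^-1 by rewrite invr_ge0 ltW.
apply/andP; split; first by rewrite mulr_ge0 ?powR_ge0 // prodr_ge0 // => j _; apply: powR_ge0.
apply: mulr_ile1; rewrite ?powR_ge0 ?prodr_ge0 //; first by move=> j _; apply: powR_ge0.
  exact: powR_le1.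
apply: prodr_ile1 => j _; rewrite powR_ge0 powR_le1 //.
by have /andP [? ?] := y01 j; apply/andP; split; rewrite ?subr_ge0 // lerBlDr lerDl.
Qed.

Lemma w_hub (p : R) n : 0 < p -> has_ubound [set Pk n p y | y in simplex n].
Proof.
move=> p0; exists (\sum_(i < n) (1 : R)) => _ [y [y0 y1] <-].
apply: ler_sum => i _.
have y01 : forall i, 0 <= y i <= 1.
  move=> j; rewrite y0 /= -y1; apply: le_sum1c => k; exact: y0.
by have /andP [] := term_bnd i p0 y01.
Qed.

Lemma w_ge1 (p : R) n : 0 < p -> 1 <= w n.+1 p.
Proof.
move=> p0; have q0 : p^-1 != 0 by rewrite invr_neq0 // lt0r_neq0.
pose e : 'I_n.+1 -> R := fun i => (i == ord0)%:R.
have es : simplex n.+1 e.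
  split; first by move=> i; rewrite /e ler0n.
  by rewrite (bigD1 ord0) //= /e eqxx big1 ?addr0 // => i /negbTE ->.
have -> : 1 = Pk n.+1 p e.
  rewrite /Pk (bigD1 ord0) //= [X in _ + X]big1 => [|i /negbTE hi]; last by rewrite /e hi powR0 // mul0r.
  rewrite addr0 /e eqxx powR1 mul1r big1 // => j /negbTE ->; by rewrite subr0 powR1.
by apply: ub_le_sup; [apply: w_hub | exists e].
Qed.

Lemma Pk_deg (p : R) n (y : 'I_n -> R) k : 0 < p -> (forall i, 0 <= y i <= 1) ->
  (forall i, i != k -> y i = 0 \/ y k = 1) -> Pk n p y <= 1.
Proof.
move=> p0 y01 hk; have q0 : p^-1 != 0 by rewrite invr_neq0 // lt0r_neq0.
rewrite /Pk (bigD1 k) //= [X in _ + X]big1 => [|i ik].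
  by rewrite addr0; have /andP[] := term_bnd k p0 y01.
 case: (hk i ik) => [->|yk1]; first by rewrite powR0 // mul0r.
rewrite (bigD1 k) /=; last by rewrite eq_sym.
by rewrite yk1 subrr powR0 // mul0r mulr0.
Qed.

Lemma Pk_main (p : R) n (y : 'I_n -> R) a b : 1 <= p ->
  (forall i, 0 <= y i < 1) -> a != b -> 0 < y a -> 0 < y b -> Pk n p y <= w n p.
Proof.
move=> p1 y01 ab ya yb.
have p0 : 0 < p by apply: lt_le_trans p1.
have q0 : 0 < p^-1 by rewrite invr_gt0.
have y0 : forall i, 0 <= y i by move=> i; case/andP: (y01 i).
have y1 : forall i, y i < 1 by move=> i; case/andP: (y01 i).
have Dpos : forall t, 0 < t -> forall i, 0 < y i + t * (1 - y i).
  move=> t t0 i; have := y0 i; have := y1 i.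
  have : 0 < t * (1 - y i) by rewrite mulr_gt0 // subr_gt0.
  lra.
pose f t := \sum_i y i / (y i + t * (1 - y i)).
pose t0 := Num.min (y a) (y b).
have t0pos : 0 < t0 by rewrite lt_min ya yb.
have t0a : t0 <= y a by rewrite ge_min lexx.
have t0b : t0 <= y b by rewrite ge_min lexx orbT.
pose t1 := 1 + \sum_i y i / (1 - y i).
have r0 : 0 <= \sum_i y i / (1 - y i).
  by apply: sumr_ge0 => i _; rewrite divr_ge0 // subr_ge0 ltW.
have t01 : t0 <= t1 by have := y1 a; rewrite /t1; lra.
have half : forall i, t0 <= y i -> 1/2 <= y i / (y i + t0 * (1 - y i)).
  move=> i hi; rewrite ler_pdivlMr; last exact: Dpos.
  have := y0 i; have := y1 i.
  have : 0 <= t0 * y i by rewrite mulr_ge0 // ltW.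
  lra.
have ft0 : 1 <= f t0.
  rewrite /f (bigD1 a) //= (bigD1 b) /=; last by rewrite eq_sym.
  have := half a t0a; have := half b t0b.
  have : 0 <= \sum_(i | (i != a) && (i != b)) y i / (y i + t0 * (1 - y i)).
    by apply: sumr_ge0 => i _; rewrite divr_ge0 // ltW // Dpos.
  lra.
have t1pos : 0 < t1 by rewrite /t1; lra.
have ft1 : f t1 <= 1.
  apply: (@le_trans _ _ ((\sum_i y i / (1 - y i)) / t1)); last first.
    by rewrite ler_pdivrMr // mul1r /t1; lra.
  rewrite mulr_suml; apply: ler_sum => i _.
  have Dp := Dpos t1 t1pos i.
  have yi1 : 0 < 1 - y i by rewrite subr_gt0.
  rewrite -subr_ge0.
  have -> : y i / (1 - y i) / t1 - y i / (y i + t1 * (1 - y i)) =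
    (y i * y i) / (t1 * (1 - y i) * (y i + t1 * (1 - y i))).
    field; rewrite ?lt0r_neq0 // mulf_neq0 // ?lt0r_neq0 //.
  by rewrite divr_ge0 ?mulr_ge0 // ltW.
have cont : {within `[t0, t1], continuous f}%classic.
  apply: continuous_in_subspaceT => t ht.
  have tpos : 0 < t.
    move: ht; rewrite inE /= in_itv /= => /andP [ht0 _]; exact: lt_le_trans ht0.
  apply: cont_sum => i; apply: cont_term; exact: lt0r_neq0 (Dpos t tpos i).
have [t ht ft] : exists2 t, t \in `[t0, t1] & f t = 1.
  apply: IVT => //; apply/andP; split; [by rewrite ge_min ft1 orbT | by rewrite le_max ft0].
have tpos : 0 < t.
  move: ht; rewrite in_itv /= => /andP [ht0 _]; exact: lt_le_trans ht0.
pose D i := y i + t * (1 - y i).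
pose x i := y i / D i.
pose u i := t / D i.
have Dp : forall i, 0 < D i by move=> i; exact: Dpos.
have xs : simplex n x.
  by split; [move=> i; rewrite divr_ge0 // ltW | exact: ft].
have x01 : forall i, 0 <= x i <= 1.
  move=> i; case: xs => xs0 xs1; rewrite xs0 /= -xs1; apply: le_sum1c => k; exact: xs0.
have hx : forall i, x i = y i * (u i / t).
  by move=> i; rewrite /x /u; field; rewrite ?lt0r_neq0 // Dp.
have h1x : forall i, 1 - x i = (1 - y i) * u i.
  by move=> i; rewrite /x /u /D; field; rewrite lt0r_neq0 // Dpos.
have hu : forall i, u i = 1 + (t - 1) * x i.
  by move=> i; rewrite /x /u /D; field; rewrite lt0r_neq0 // Dpos.
have u0 : forall i, 0 <= u i by move=> i; rewrite divr_ge0 // ltW.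
have Pu : t <= \prod_i u i.
  have := @weier _ (index_enum 'I_n) x (t - 1) (ltac:(lra)) x01.
  case: xs => _ ->; rewrite mulr1 (eq_bigr _ (fun i _ => esym (hu i))).
  by have -> : 1 + (t - 1) = t by ring.
apply: (@le_trans _ _ (Pk n p x)); last by apply: ub_le_sup; [apply: w_hub | exists x].
rewrite /Pk; apply: ler_sum => i _.
have y01w : forall i, 0 <= y i <= 1 by move=> j; rewrite y0 ltW.
have /andP [ty0 _] := term_bnd i p0 y01w.
have y1' : forall j, 0 <= 1 - y j by move=> j; rewrite subr_ge0 ltW.
have -> : x i `^ p^-1 * \prod_(j | j != i) (1 - x j) `^ p^-1 =
    (y i `^ p^-1 * \prod_(j | j != i) (1 - y j) `^ p^-1) *
    (((u i / t) * \prod_(j | j != i) u j) `^ p^-1).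
  have ut0 : 0 <= u i / t by rewrite divr_ge0 // ltW.
  rewrite hx powRM //.
  under eq_bigr => j _ do rewrite h1x powRM //.
  rewrite big_split /= [in RHS]powRM ?prodr_ge0 //.
  rewrite -(prod_powR _ _ _ _ u0); ring.
apply: ler_peMr => //.
have -> : u i / t * \prod_(j | j != i) u j = (\prod_j u j) / t.
  by rewrite [in RHS](bigD1 i) //=; ring.
have h1 : 1 <= (\prod_j u j) / t by rewrite ler_pdivlMr // mul1r.
have := ge0_ler_powR (ltW q0) (ler01) (le_trans ler01 h1) h1.
by rewrite powR1.
Qed.

Lemma Pk_le_w (p : R) n (y : 'I_n.+1 -> R) : 1 <= p ->
  (forall i, 0 <= y i <= 1) -> Pk n.+1 p y <= w n.+1 p.
Proof.
move=> p1 y01; have p0 : 0 < p by apply: lt_le_trans p1.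
have w1 := w_ge1 _ n p0.
case: (boolP [exists k, y k == 1]) => [/existsP [k /eqP yk] | /existsPn hk].
  by apply: le_trans (Pk_deg _ _ _ k p0 y01 _) w1 => i _; right.
have y01' : forall i, 0 <= y i < 1.
  by move=> i; case/andP: (y01 i) => -> h; rewrite lt_neqAle h (hk i).
case: (boolP [exists a, exists b, (a != b) && (0 < y a) && (0 < y b)]) =>
    [/existsP [a /existsP [b /andP [/andP [ab ya] yb]]] | /existsPn hab].
  exact: (Pk_main _ _ _ _ _ p1 y01' ab ya yb).
have yz : forall i, ~~ (0 < y i) -> y i = 0.
  move=> i hi; apply/eqP; rewrite eq_le [y i <= 0]leNgt hi /=; by case/andP: (y01 i).
case: (boolP [exists a, 0 < y a]) => [/existsP [a ya] | /existsPn hna].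
  apply: le_trans (Pk_deg _ _ _ a p0 y01 _) w1 => i ia; left; apply: yz.
  have /existsPn /(_ a) := hab i.
  by rewrite ia ya /= andbT.
by apply: le_trans (Pk_deg _ _ _ ord0 p0 y01 _) w1 => i _; left; apply: yz.
Qed.

End T.

Lemma prod_lift (R : realType) m (F : 'I_m.+1 -> R) j :
  \prod_(k | k != j) F k = \prod_(i < m) F (lift j i).
Proof.
rewrite (reindex_omap (lift j) (unlift j)) /=.
  by apply: eq_bigl => i; rewrite liftK eq_sym neq_lift eqxx.
by move=> i; case: unliftP => [k ->|->]; rewrite ?eqxx.
Qed.

Theorem mainTheorem6 (R : realType) (p : R) (n : nat) :
  1 <= p -> (2 <= n)%N -> U n p <= U n.-1 p * w n p.
Proof.
move=> p1; case: n => [|[|m]] // _ /=.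
have p0 : 0 < p by apply: lt_le_trans p1.
have pn0 : p != 0 by apply: lt0r_neq0.
pose E k : 'M[R]_k.+1 := \matrix_(i, j) ((j == ord0)%:R).
have E_unit : forall k, rows_lp_unit p _ (E k).
  move=> k i; rewrite (bigD1 ord0) //= [X in _ + X]big1 => [|j /negbTE hj].
    by rewrite addr0 !mxE eqxx normr1 !powR1.
  by rewrite mxE hj normr0 powR0.
have U0 : 0 <= U m.+1 p.
  have := @per_le_U R p m (E m) p1.
  rewrite big1 ?mulr1 => [h|i _]; last exact: E_unit.
  exact: le_trans (normr_ge0 _) h.
rewrite {1}/U; apply: ge_sup.
  by exists (Defs.perm_mx _ (E m.+1)); exists (E m.+1) => //; apply: E_unit.
move=> _ [A hA <-].
pose c := @ord0 m.+1.
rewrite (@perm_expand_col R _ A c).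
pose y j := `|A j c| `^ p.
have rs := @unit_rowsum R _ _ _ p0 hA.
have y01 : forall j, 0 <= y j <= 1.
  move=> j; rewrite /y powR_ge0 /= -(rs j).
  exact: (@le_sum1 R _ (fun l => `|A j l| `^ p) c (fun l => powR_ge0 _ _)).
apply: (@le_trans _ _ (U m.+1 p * Pk m.+2 p y)); last by rewrite ler_wpM2l // Pk_le_w.
rewrite /Pk mulr_sumr; apply: ler_sum => j _.
have hy : y j `^ p^-1 = `|A j c| by rewrite /y -powRrM mulfV // powRr1.
have hprod : \prod_(k | k != j) (1 - y k) `^ p^-1 = \prod_i @rn R p _ (@minor R _ A j c) i.
  rewrite prod_lift; apply: eq_bigr => i _; rewrite /rn.
  under [in RHS]eq_bigr do rewrite mxE.
  have := rs (lift j i); rewrite (bigD1_ord c) //= => h.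
  by rewrite -h /y addrAC subrr add0r.
rewrite hy hprod mulrCA.
apply: le_trans (ler_norm _) _; rewrite normrM.
by apply: ler_wpM2l => //; apply: per_le_U.
Qed.
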